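(* Let $\Gamma$ be a Lie group with a left invariant metric, $\Gamma_0\triangleleft\Gamma$ the connected component of the identity, $\Gamma_i$ a sequence of discrete groups, and $f_i:\Gamma_i\to\Gamma$ a discrete approximation. Let $r>0$ be such that $B_e(r,\Gamma)\subset\Gamma_0$, and for each $i$ let $G_i\leq\Gamma_i$ be the subgroup generated by $f_i^{-1}(B_e(r,\Gamma))$. Then for $i$ large enough, $G_i$ is a normal subgroup of $\Gamma_i$.
   Context: A sequence of functions $f_i:\Gamma_i\to\Gamma$ is a discrete approximation if there is $R_0>0$ such that for large $i$, $f_i^{-1}(B_e(R_0,\Gamma))$ is a generating set of $\Gamma_i$ containing the identity, and for every $R>0$, $\varepsilon>0$ there is $i_0$ such that for all $i\geq i_0$: (1) $f_i^{-1}(B_e(R,\Gamma))$ is finite; (2) $f_i(\Gamma_i)$ intersects each ball of radius $\varepsilon$ centered at a point of $B_e(R,\Gamma)$; (3) for all $g_1,g_2\in f_i^{-1}(B_e(R,\Gamma))$, $d(f_i(g_1g_2^{-1}),f_i(g_1)f_i(g_2^{-1}))\leq\varepsilon$. *)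

(* Defs.v *)
From HB Require Import structures.
From mathcomp Require Import all_boot all_order all_algebra.
From mathcomp Require Import all_classical all_reals topology normedtype derive.
Import numFieldNormedType.Exports.
Import Order.TTheory GRing.Theory Num.Theory.

Set Implicit Arguments.
Unset Strict Implicit.
Unset Printing Implicit Defensive.

Local Open Scope classical_set_scope.
Local Open Scope ring_scope.

Section Defs.
Variable R : realType.

Section GroupDefs.
Variable G : groupType.

Definition is_subgroup (H : set G) : Prop :=
  H 1%g /\ (forall x y, H x -> H y -> H (x * y)%g) /\ (forall x, H x -> H (x^-1)%g).

Definition generated (S : set G) : set G :=
  fun x => forall H, is_subgroup H -> S `<=` H -> H x.

Definition is_normal_subgroup (H : set G) : Prop :=
  is_subgroup H /\ forall g h, H h -> H (g^-1 * h * g)%g.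
End GroupDefs.

Section MetricDefs.
Variable G : groupType.
Variable d : G -> G -> R.

Definition is_metric : Prop :=
  (forall x y, 0 <= d x y) /\ (forall x y, d x y = 0 <-> x = y) /\
  (forall x y, d x y = d y x) /\ (forall x y z, d x z <= d x y + d y z).

Definition left_invariant : Prop := forall g x y, d (g * x)%g (g * y)%g = d x y.

Definition mball (x : G) (r : R) : set G := fun y => d x y < r.

Definition d_open (S : set G) : Prop :=
  forall x, S x -> exists2 eps, 0 < eps & mball x eps `<=` S.

Definition d_connected (S : set G) : Prop :=
  forall A B : set G, d_open A -> d_open B -> S `<=` A `|` B ->
    S `&` A `&` B = set0 -> S `<=` A \/ S `<=` B.

Definition d_component (x : G) : set G :=
  fun y => exists S, [/\ d_connected S, S x & S y].

Definition d_topological_group : Prop :=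
  (forall x y eps, 0 < eps -> exists2 del, 0 < del &
     forall x' y', d x x' < del -> d y y' < del -> d (x * y)%g (x' * y')%g < eps) /\
  (forall x eps, 0 < eps -> exists2 del, 0 < del &
     forall x', d x x' < del -> d (x^-1)%g (x'^-1)%g < eps).
End MetricDefs.

Fixpoint iterD m k (vs : seq 'rV[R]_m) (f : 'rV[R]_m -> 'rV[R]_k) : 'rV[R]_m -> 'rV[R]_k :=
  match vs with
  | [::] => f
  | v :: vs' => fun x => 'D_v (iterD vs' f) x
  end.

Definition smooth_on m k (A : set 'rV[R]_m) (f : 'rV[R]_m -> 'rV[R]_k) : Prop :=
  forall (vs : seq 'rV[R]_m) x, A x ->
    {for x, continuous (iterD vs f)} /\ forall v, derivable (iterD vs f) x v.

Definition is_lie_group (G : groupType) (d : G -> G -> R) : Prop :=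
  d_topological_group d /\
  exists (n : nat) (I : Type) (U : I -> set G)
         (phi : I -> G -> 'rV[R]_n) (psi : I -> 'rV[R]_n -> G),
  let V a := phi a @` U a in
     (forall x, exists a, U a x) /\
     (forall a, d_open d (U a) /\ open (V a)) /\
     (forall a x, U a x -> psi a (phi a x) = x) /\
     (forall a x eps, U a x -> 0 < eps -> exists2 del, 0 < del &
         forall y, U a y -> d x y < del -> `|phi a y - phi a x| < eps) /\
     (forall a u eps, V a u -> 0 < eps -> exists2 del, 0 < del &
         forall w, V a w -> `|w - u| < del -> d (psi a u) (psi a w) < eps) /\
     (forall a b, smooth_on (phi a @` (U a `&` U b)) (fun u => phi b (psi a u))) /\
      (* smooth multiplication in charts *)
     (forall a b c, smooth_on
        [set w : 'rV[R]_(n + n) | [/\ V a (lsubmx w), V b (rsubmx w) &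
                                    U c (psi a (lsubmx w) * psi b (rsubmx w))%g]]
        (fun w => phi c (psi a (lsubmx w) * psi b (rsubmx w))%g)) /\
     (forall a b, smooth_on [set u | V a u /\ U b ((psi a u)^-1)%g]
        (fun u => phi b ((psi a u)^-1)%g)).

Definition discrete_approximation (Gam : groupType) (d : Gam -> Gam -> R)
  (Gi : nat -> groupType) (f : forall i, Gi i -> Gam) : Prop :=
  (exists2 R0, 0 < R0 & exists i1, forall i, (i1 <= i)%N ->
     generated (f i @^-1` mball d 1%g R0) = setT /\ (f i @^-1` mball d 1%g R0) 1%g) /\
  forall Rr eps, 0 < Rr -> 0 < eps -> exists i0, forall i, (i0 <= i)%N ->
    [/\ finite_set (f i @^-1` mball d 1%g Rr),
        (forall x, mball d 1%g Rr x -> exists g, d (f i g) x < eps) &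
        (forall g1 g2, (f i @^-1` mball d 1%g Rr) g1 -> (f i @^-1` mball d 1%g Rr) g2 ->
           d (f i (g1 * g2^-1)%g) (f i g1 * f i (g2^-1))%g <= eps)].

End Defs.

(* Main.v *)
Require Import Defs.
From HB Require Import structures.
From mathcomp Require Import all_boot all_order all_algebra.
From mathcomp Require Import all_classical all_reals topology normedtype derive.
From mathcomp Require Import lra.
Import Order.TTheory GRing.Theory Num.Theory.
Local Open Scope classical_set_scope.
Local Open Scope ring_scope.
Set Implicit Arguments.
Unset Strict Implicit.

Lemma fin_bound (R : realType) (T : Type) (F : set T) (P : T -> R -> Prop) :
  finite_set F -> (forall n M M', 0 < M -> M <= M' -> P n M -> P n M') ->
  (forall n, F n -> exists2 M, 0 < M & P n M) ->
  exists2 M, 0 < M & forall n, F n -> P n M.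
Proof.
elim/Peq: T => T in F P *.
move=> /finite_seqP [s ->] Pmono Pex.
elim: s Pex => [|a s IH] Pex; first by exists 1 => //.
have [M1 M1p HM1] : exists2 M, 0 < M & forall n, [set` s] n -> P n M.
  by apply: IH => n ns; apply: Pex; rewrite /= in_cons ns orbT.
have [M2 M2p HM2] := Pex a (mem_head a s).
exists (Num.max M1 M2); first by rewrite lt_max M1p.
move=> n /=; rewrite in_cons => /orP [/eqP -> | ns].
  by apply: (Pmono _ M2) => //; rewrite le_max lexx orbT.
by apply: (Pmono _ M1 _ M1p _ (HM1 _ ns)); rewrite le_max lexx.
Qed.

Section Met.
Variables (R : realType) (G : groupType) (d : G -> G -> R).
Hypotheses (dm : is_metric d) (dl : left_invariant d).

Lemma d_ge0 x y : 0 <= d x y. Proof. by case: dm. Qed.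
Lemma dxx x : d x x = 0. Proof. by case: dm => _ [/(_ x x) [_ ->]]. Qed.
Lemma dC x y : d x y = d y x. Proof. by case: dm => _ [_ []]. Qed.
Lemma dtri x y z : d x z <= d x y + d y z. Proof. by case: dm => _ [_ []]. Qed.
Lemma dL g x y : d (g * x)%g (g * y)%g = d x y. Proof. exact: dl. Qed.
Lemma d1M a b : d 1%g (a * b)%g <= d 1%g a + d 1%g b.
Proof.
apply: le_trans (dtri _ a _) _; rewrite -{2}[a]mulg1 dL lexx //.
Qed.
Lemma dV a b : d a b = d 1%g (a^-1 * b)%g.
Proof. by rewrite -(dL a^-1) mulVg. Qed.
Lemma d1V a : d 1%g (a^-1)%g = d 1%g a.
Proof. by rewrite -(dL a) mulgV mulg1 dC. Qed.

Inductive reach (A : set G) (del : R) : G -> Prop :=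
| reach0 : reach A del 1%g
| reachS p q : reach A del p -> A q -> d p q < del -> reach A del q.

Lemma reach_mono A B del y : A `<=` B -> reach A del y -> reach B del y.
Proof.
move=> AB; elim => [|p q _ IH Aq dpq]; first exact: reach0.
exact: reachS IH (AB _ Aq) dpq.
Qed.

Lemma reach_conn S del : 0 < del -> d_connected d S -> S 1%g ->
  forall y, S y -> reach S del y.
Proof.
move=> del0 conn S1.
pose A := fun z => exists p, reach S del p /\ d p z < del.
pose B := fun z => exists q, [/\ S q, ~ reach S del q & d q z < del / 2].
have oA : d_open d A.
  move=> z [p [rp dpz]]; exists (del - d p z); first by rewrite subr_gt0.
  move=> w; rewrite /mball => dzw; exists p; split => //.
  by apply: le_lt_trans (dtri p z w) _; rewrite -ltrBrDl.
have oB : d_open d B.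
  move=> z [q [Sq nq dqz]]; exists (del / 2 - d q z); first by rewrite subr_gt0.
  move=> w; rewrite /mball => dzw; exists q; split => //.
  by apply: le_lt_trans (dtri q z w) _; rewrite -ltrBrDl.
have cov : S `<=` A `|` B.
  move=> z Sz; case: (pselect (reach S del z)) => rz.
    by left; exists z; rewrite dxx.
  by right; exists z; rewrite dxx; split => //; rewrite divr_gt0.
have dis : S `&` A `&` B = set0.
  apply/seteqP; split => // z [[Sz [p [rp dpz]]] [q [Sq nq dqz]]].
  have rz : reach S del z by apply: reachS rp Sz dpz.
  apply: nq; apply: reachS rz Sq _; rewrite dC.
  by apply: lt_trans dqz _; rewrite ltr_pdivrMr // ltr_pMr // ltr1n.
case: (conn A B oA oB cov dis) => [SA | SB].
  by move=> y Sy; have [p [rp dpy]] := SA y Sy; apply: reachS rp Sy dpy.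
have [q [Sq nq dq1]] := SB _ S1.
exfalso; apply: nq; apply: reachS (reach0 S del) Sq _.
rewrite dC; lra.
Qed.

Lemma reach_bound A del y : reach A del y ->
  exists2 M, 0 < M & reach (mball d 1%g M) del y.
Proof.
elim => [|p q _ [M M0 IH] Aq dpq]; first by exists 1 => //; apply: reach0.
exists (Num.max M (d 1%g q + 1)); first by rewrite lt_max M0.
have IH' : reach (mball d 1%g (Num.max M (d 1%g q + 1))) del p.
  by apply: reach_mono IH => z; rewrite /mball => h; rewrite lt_max h.
apply: reachS IH' _ dpq.
by rewrite /mball lt_max ltrDl ltr01 orbT.
Qed.

Lemma reach_in M del y : 0 < M -> reach (mball d 1%g M) del y -> d 1%g y < M.
Proof. by move=> M0; case => // *; rewrite dxx. Qed.

End Met.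
Section Approx.
Variables (R : realType) (G : groupType) (d : G -> G -> R).
Hypotheses (dm : is_metric d) (dl : left_invariant d).
Variables (H : groupType) (f : H -> G) (K eps : R).
Hypothesis H1 : d 1%g (f 1%g) < K.
Hypothesis H3 : forall g1 g2, d 1%g (f g1) < K -> d 1%g (f g2) < K ->
  d (f (g1 * g2^-1)%g) (f g1 * f (g2^-1))%g <= eps.

Let dC := dC dm.
Let dtri := dtri dm.
Let dL := dL dl.

Lemma f1 : d 1%g (f 1%g) <= eps.
Proof.
have := H3 H1 H1; rewrite invg1 mulg1.
by rewrite -{1}[f 1%g]mulg1 dL.
Qed.

Lemma fV a : d 1%g (f a) < K -> d 1%g (f a^-1) <= d 1%g (f a) + 2 * eps.
Proof.
move=> Ka; have := H3 Ka Ka; rewrite mulgV => h.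
have e1 := f1.
rewrite -(dL (f a)) mulg1.
have := dtri (f a) 1%g (f a * f a^-1)%g.
have := dtri 1%g (f 1%g) (f a * f a^-1)%g.
rewrite (dC (f a) 1%g); lra.
Qed.

Lemma fVV a : d 1%g (f a) < K -> d 1%g (f a^-1) < K ->
  d (f a) ((f a^-1)^-1)%g <= 2 * eps.
Proof.
move=> Ka Kai; have := H3 Kai Kai; rewrite invgK mulVg => h.
have e1 := f1.
rewrite -(dL (f a^-1)) mulgV.
have := dtri (f a^-1 * f a)%g (f 1%g) 1%g.
rewrite (dC _ (f 1%g)) (dC (f 1%g) 1%g); lra.
Qed.

Lemma fdiv a b : d 1%g (f a) < K -> d 1%g (f b) < K ->
  d 1%g (f a^-1) < K -> d 1%g (f b^-1) < K ->
  d 1%g (f (a^-1 * b)%g) <= d (f a) (f b) + 3 * eps.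
Proof.
move=> Ka Kb Kai Kbi; have := H3 Kai Kbi; rewrite invgK => h.
have h2 := fVV Ka Kai.
have := dtri 1%g (f a^-1 * f b)%g (f (a^-1 * b)%g).
have -> : d 1%g (f a^-1 * f b)%g = d ((f a^-1)^-1)%g (f b).
  by rewrite (dV dl _ (f _)) invgK.
have := dtri ((f a^-1)^-1)%g (f a) (f b).
rewrite (dC (f a^-1 * f b)%g (f (a^-1 * b)%g)) (dC ((f a^-1)^-1)%g (f a)); lra.
Qed.

Lemma fconj t u : d 1%g (f t) < K -> d 1%g (f t^-1) < K -> d 1%g (f u) < K ->
  d 1%g (f (u * t)%g) < K -> d 1%g (f (u * t)^-1)%g < K ->
  d 1%g (f (t^-1 * u * t)%g) <= d (f t) (f u * f t)%g + 4 * eps.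
Proof.
move=> Kt Kti Ku Kut Kuti.
have := H3 Kti Kuti; rewrite invgK mulgA => h.
have := H3 Ku Kti; rewrite invgK => h'.
have h2 := fVV Kt Kti.
have := dtri 1%g (f t^-1 * f (u * t))%g (f (t^-1 * u * t)%g).
have -> : d 1%g (f t^-1 * f (u * t))%g = d ((f t^-1)^-1)%g (f (u * t)%g).
  by rewrite (dV dl _ (f _)) invgK.
have := dtri ((f t^-1)^-1)%g (f t) (f (u * t)%g).
have := dtri (f t) (f u * f t)%g (f (u * t)%g).
rewrite (dC (f t^-1 * f (u * t))%g (f (t^-1 * u * t)%g)) (dC ((f t^-1)^-1)%g (f t)) (dC (f u * f t)%g (f (u * t)%g)); lra.
Qed.

End Approx.

Lemma fMb (R : realType) (G : groupType) (d : G -> G -> R)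
  (dm : is_metric d) (dl : left_invariant d) (H : groupType) (f : H -> G) (K eps : R)
  (H3 : forall g1 g2, d 1%g (f g1) < K -> d 1%g (f g2) < K ->
  d (f (g1 * g2^-1)%g) (f g1 * f (g2^-1))%g <= eps) (a b : H) :
  d 1%g (f a) < K -> d 1%g (f b^-1)%g < K ->
  d 1%g (f (a * b)%g) <= d 1%g (f a) + d 1%g (f b) + eps.
Proof.
move=> Ka Kbi; have := H3 _ _ Ka Kbi; rewrite invgK => h.
have := dtri dm 1%g (f a * f b)%g (f (a * b)%g).
have := d1M dm dl (f a) (f b).
rewrite (dC dm (f a * f b)%g); lra.
Qed.

Section GroupFacts.
Variable G : groupType.
Implicit Types (S : set G) (t a b h : G).

Lemma gen_sub S : is_subgroup (generated S).
Proof.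
split; first by move=> K [K1 _] _.
split; first by move=> x y hx hy K sK SK; case: (sK) => _ [KM _]; apply: KM; [apply: hx|apply: hy].
by move=> x hx K sK SK; case: (sK) => _ [_ KV]; apply: KV; apply: hx.
Qed.

Lemma gen_incl S : S `<=` generated S.
Proof. by move=> x Sx K _ SK; apply: SK. Qed.

Lemma conj1 t : (t^-1 * 1 * t = 1)%g.
Proof. by rewrite mulg1 mulVg. Qed.
Lemma conjM t a b : (t^-1 * (a * b) * t = (t^-1 * a * t) * (t^-1 * b * t))%g.
Proof. by rewrite !mulgA mulgK. Qed.
Lemma conjV t a : (t^-1 * a^-1 * t = (t^-1 * a * t)^-1)%g.
Proof. by rewrite !invgM invgK mulgA. Qed.
Lemma conjMM a b h : ((a * b)^-1 * h * (a * b) = b^-1 * (a^-1 * h * a) * b)%g.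
Proof. by rewrite invgM !mulgA. Qed.
Lemma conjMM' a b h : ((a * b) * h * (a * b)^-1 = a * (b * h * b^-1) * a^-1)%g.
Proof. by rewrite invgM !mulgA. Qed.
End GroupFacts.

Unset Implicit Arguments.
Set Strict Implicit.

Theorem mainTheorem13 (R : realType) (Gam : groupType) (d : Gam -> Gam -> R)
  (d_metric : is_metric d) (d_linv : left_invariant d) (lie : is_lie_group d)
  (Gi : nat -> groupType) (f : forall i, Gi i -> Gam)
  (approx : discrete_approximation d f)
  (r : R) (r_pos : 0 < r) (r_small : mball d 1%g r `<=` d_component d 1%g) :
  exists i0, forall i, (i0 <= i)%N ->
    is_normal_subgroup (generated (f i @^-1` mball d 1%g r)).
Proof.
have dm := d_metric; have dl := d_linv.
case: lie => [[topM _] _].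
case: approx => [[R0 R0p [i1 Hi1]] Happ].
pose R2 := R0 + 1.
have R2p : 0 < R2 by rewrite /R2; lra.
have [rp rpp UC] : exists2 rp, 0 < rp & forall z w, d 1%g z < R2 -> d 1%g w < rp ->
    d z (w * z)%g < r / 4.
  have eta0 : 0 < r / 16 by lra.
  have [j Hj] := Happ (R2 + r / 16) (r / 16) ltac:(lra) eta0.
  have [Fin Den _] := Hj j (leqnn j).
  have [| |M M0 HM] := @fin_bound R _ _
    (fun n M => forall w, d 1%g w < M^-1 -> d (f j n) (w * f j n)%g < r / 8) Fin.
  - move=> n M M' M0 MM' h w hw; apply: h; apply: lt_le_trans hw _.
    by rewrite lef_pV2 ?posrE //; apply: lt_le_trans MM'.
  - move=> n _; have [del del0 Hdel] := topM 1%g (f j n) (r / 8) ltac:(lra).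
    exists del^-1; first by rewrite invr_gt0.
    move=> w; rewrite invrK => hw.
    by have := Hdel w (f j n) hw; rewrite mul1g dxx //; apply.
  exists M^-1; first by rewrite invr_gt0.
  move=> z w zR wr.
  have [g hg] := Den z ltac:(rewrite /mball; lra).
  have Fg : (f j @^-1` mball d 1%g (R2 + r / 16)) g.
    rewrite /= /mball; have := dtri dm 1%g z (f j g); rewrite (dC dm z); lra.
  have h1 := HM g Fg w wr.
  have := dtri dm z (f j g) (w * z)%g.
  have := dtri dm (f j g) (w * f j g)%g (w * z)%g.
  rewrite (dL dl) (dC dm z (f j g)); lra.
pose del := rp / 2.
have del0 : 0 < del by rewrite /del; lra.
have [R1 R1p CH] : exists2 R1, 0 < R1 & forall y, d 1%g y < r ->
    reach d (mball d 1%g R1) del y.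
  have [j Hj] := Happ (r + del / 2) (del / 2) ltac:(lra) ltac:(lra).
  have [Fin Den _] := Hj j (leqnn j).
  have [| |M M0 HM] := @fin_bound R _ _
    (fun n M => forall y, d 1%g y < r -> d (f j n) y < del / 2 ->
       reach d (mball d 1%g M) del y) Fin.
  - move=> n M M' M0 MM' h y yr yn; apply: reach_mono (h y yr yn).
    by move=> z; rewrite /mball => hz; apply: lt_le_trans MM'.
  - move=> n _.
    case: (pselect (exists y0, d 1%g y0 < r /\ d (f j n) y0 < del / 2)) =>
      [[y0 [y0r y0n]] | ny]; last first.
      by exists 1 => // y yr yn; exfalso; apply: ny; exists y.
    have [S [Sc S1 Sy0]] := r_small y0 y0r.
    have [M0 M0p r0] := reach_bound (reach_conn dm del0 Sc S1 Sy0).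
    exists (Num.max M0 r); first by rewrite lt_max M0p.
    move=> y yr yn.
    have r0' : reach d (mball d 1%g (Num.max M0 r)) del y0.
      by apply: reach_mono r0 => z; rewrite /mball => hz; rewrite lt_max hz.
    apply: reachS r0' _ _; first by rewrite /mball lt_max yr orbT.
    have := dtri dm y0 (f j n) y; rewrite (dC dm y0 (f j n)); lra.
  exists M => // y yr.
  have [g hg] := Den y ltac:(rewrite /mball; lra).
  have Fg : (f j @^-1` mball d 1%g (r + del / 2)) g.
    rewrite /= /mball; have := dtri dm 1%g y (f j g); rewrite (dC dm y); lra.
  exact: HM g Fg y yr hg.
have [eps [e0 e1 e2 e3]] : exists eps : R,
    [/\ 0 < eps, eps <= rp / 20, eps <= r / 16 & eps <= 1 / 4].
  exists (Num.min (Num.min (rp / 20) (r / 16)) (1 / 4)).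
  rewrite !lt_min !ge_min !lexx !orbT /=; split => //.
  by rewrite !divr_gt0.
pose K := R1 + R2 + r + rp + 10.
have K0 : 0 < K by rewrite /K; lra.
have [i0 Hi0] := Happ K eps K0 e0.
exists (maxn i0 i1) => i hi.
have [_ Den H3] := Hi0 i (leq_trans (leq_maxl _ _) hi).
have [Gen T1] := Hi1 i (leq_trans (leq_maxr _ _) hi).
have T1' : d 1%g (f i 1%g) < R0 := T1.
have H1 : d 1%g (f i 1%g) < K by rewrite /K /R2; lra.
pose Gs := generated (f i @^-1` mball d 1%g r).
have Gsub : is_subgroup Gs := gen_sub _.
case: (Gsub) => [Gs1 [GsM GsV]].
pose Cj := fun g => forall t, d 1%g (f i t) < R2 -> Gs (t^-1 * g * t)%g.
have CjM : forall a b, Cj a -> Cj b -> Cj (a * b)%g.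
  by move=> a b ha hb t ht; rewrite conjM; apply: GsM; [apply: ha | apply: hb].
have Cbase : forall u, d 1%g (f i u) < rp -> Cj u.
  move=> u hu t ht; apply: gen_incl; rewrite /= /mball.
  have Kt : d 1%g (f i t) < K by rewrite /K; lra.
  have Kti0 := fV dm dl H1 H3 Kt.
  have Kti : d 1%g (f i (t^-1)%g) < K by rewrite /K; lra.
  have Ku : d 1%g (f i u) < K by rewrite /K; lra.
  have Kut0 := fMb dm dl H3 Ku Kti.
  have Kut : d 1%g (f i (u * t)%g) < K by rewrite /K; lra.
  have Kuti0 := fV dm dl H1 H3 Kut.
  have Kuti : d 1%g (f i ((u * t)^-1)%g) < K by rewrite /K; lra.
  have := fconj dm dl H1 H3 Kt Kti Ku Kut Kuti.
  have := UC _ _ ht hu; lra.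
have Creach : forall p, reach d (mball d 1%g R1) del p ->
    forall g, d (f i g) p < eps -> Cj g.
  move=> p; elim => [|p' q rp' IH q1 dpq] g hg.
    by apply: Cbase; rewrite (dC dm); lra.
  have pin := reach_in dm R1p rp'.
  have [g' hg'] := Den p' ltac:(rewrite /mball /K; lra).
  have Cg' := IH g' hg'.
  rewrite -(mulVKg g' g); apply: CjM => //; apply: Cbase.
  have Kg' : d 1%g (f i g') < K.
    have := dtri dm 1%g p' (f i g'); rewrite (dC dm p' (f i g')) /K; lra.
  have Kg : d 1%g (f i g) < K.
    move: q1; rewrite /mball => q1.
    have := dtri dm 1%g q (f i g); rewrite (dC dm q (f i g)) /K; lra.
  have Kg'i0 := fV dm dl H1 H3 Kg'.
  have Kgi0 := fV dm dl H1 H3 Kg.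
  have Kg'i : d 1%g (f i (g'^-1)%g) < K.
    have := dtri dm 1%g p' (f i g'); rewrite (dC dm p' (f i g')) /K; lra.
  have Kgi : d 1%g (f i (g^-1)%g) < K.
    move: q1; rewrite /mball => q1.
    have := dtri dm 1%g q (f i g); rewrite (dC dm q (f i g)) /K; lra.
  have := fdiv dm dl H1 H3 Kg' Kg Kg'i Kgi.
  have := dtri dm (f i g') p' (f i g).
  have := dtri dm p' q (f i g).
  rewrite (dC dm q (f i g)); move: dpq; rewrite /del => dpq; lra.
have CS : forall s, d 1%g (f i s) < r -> Cj s.
  by move=> s hs; apply: (Creach _ (CH _ hs)); rewrite dxx.
have conjsub : forall t, d 1%g (f i t) < R2 -> forall h, Gs h -> Gs (t^-1 * h * t)%g.
  move=> t ht h Gh; apply: (Gh (fun h => Gs (t^-1 * h * t)%g)).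
    split; first by rewrite conj1.
    split; first by move=> x y hx hy; rewrite conjM; apply: GsM.
    by move=> x hx; rewrite conjV; apply: GsV.
  by move=> s hs; apply: CS.
pose N := fun g => forall h, Gs h -> Gs (g^-1 * h * g)%g /\ Gs (g * h * g^-1)%g.
have NT : generated (f i @^-1` mball d 1%g R0) `<=` N.
  move=> x hx; apply: hx.
    split; first by move=> h Gh; rewrite invg1 mul1g mulg1.
    split.
      move=> a b ha hb h Gh; rewrite conjMM conjMM'; split.
        by apply: (hb _ (ha _ Gh).1).1.
      by apply: (ha _ (hb _ Gh).2).2.
    move=> a ha h Gh; rewrite invgK; split; [exact: (ha _ Gh).2 | exact: (ha _ Gh).1].
  move=> g hg0; have hg : d 1%g (f i g) < R0 := hg0.
  have Kg : d 1%g (f i g) < K by rewrite /K /R2; lra.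
  have Kgi0 := fV dm dl H1 H3 Kg.
  move=> h Gh; split; first by apply: conjsub => //; rewrite /R2; lra.
  rewrite -{1}(invgK g); apply: conjsub => //; rewrite /R2; lra.
split => // g h Gh.
have : N g by apply: NT; rewrite Gen.
by move=> /(_ h Gh) [].
Qed.
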